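(* Let $(\underline{\mathbf{V}},\underline{\mathbf{P}})$ be a subsolution and $(\overline{\mathbf{V}},\overline{\mathbf{P}})$ a supersolution of the asymptotic system described in the context, both locally bounded in time, with $\underline{V}_j(0)\le\overline{V}_j(0)$ and $\underline{P}_j(0)\le\overline{P}_j(0)$ for all $j\in\mathbb{Z}$. Then $\underline{V}_j(t)\le\overline{V}_j(t)$ and $\underline{P}_j(t)\le\overline{P}_j(t)$ for all $t>0$, $j\in\mathbb{Z}$. If moreover $(\underline{\mathbf{V}}(0),\underline{\mathbf{P}}(0))\not\equiv(\overline{\mathbf{V}}(0),\overline{\mathbf{P}}(0))$, then $\underline{V}_j(t)<\overline{V}_j(t)$ and $\underline{P}_j(t)<\overline{P}_j(t)$ for all $t>0$, $j\in\mathbb{Z}$.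
   Context: Fix $\alpha,\beta>0$ and $f\in\mathscr{C}^1([0,1])$ with $f(0)=f(1)=0$, $0<f(u)\le f'(0)u$ on $(0,1)$, extended to a locally Lipschitz function on $\mathbb{R}$ negative on $\mathbb{R}\setminus[0,1]$. The asymptotic system is $V_j'=-2\alpha V_j+\beta(P_j+P_{j+1})$, $P_j'=f(P_j)+\alpha(V_j+V_{j-1})-2\beta P_j$ ($t>0$, $j\in\mathbb{Z}$). A supersolution is $(\overline{\mathbf{V}},\overline{\mathbf{P}})$ with $\overline{V}_j,\overline{P}_j\in\mathscr{C}^1([0,+\infty),\mathbb{R})$ such that for all $t>0$, $j$: $\overline{V}_j'\ge-2\alpha\overline{V}_j+\beta(\overline{P}_j+\overline{P}_{j+1})$ and $\overline{P}_j'\ge f(\overline{P}_j)+\alpha(\overline{V}_j+\overline{V}_{j-1})-2\beta\overline{P}_j$; a subsolution has both inequalities reversed. Locally bounded in time: $\sup_{t\in[0,T],j\in\mathbb{Z}}(|V_j(t)|+|P_j(t)|)<\infty$ for every $T>0$. *)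

(* Defs.v *)
From Stdlib Require Import Reals ZArith.
From Coquelicot Require Import Coquelicot.
Open Scope R_scope.

(* In particular f'(0) = df 0. *)
Definition C1_on_01 (f df : R -> R) : Prop :=
  (forall u, 0 <= u <= 1 ->
     filterlim (fun v => (f v - f u) / (v - u))
       (within (fun v => 0 <= v <= 1 /\ v <> u) (locally u)) (locally (df u))) /\
  (forall u, 0 <= u <= 1 ->
     filterlim df (within (fun v => 0 <= v <= 1) (locally u)) (locally (df u))).

Definition locally_lipschitz (f : R -> R) : Prop :=
  forall x : R, exists delta L : R, 0 < delta /\
    forall y z : R, Rabs (y - x) < delta -> Rabs (z - x) < delta ->
      Rabs (f y - f z) <= L * Rabs (y - z).

Definition admissible_f (f df : R -> R) : Prop :=
  C1_on_01 f df /\ f 0 = 0 /\ f 1 = 0 /\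
  (forall u, 0 < u < 1 -> 0 < f u /\ f u <= df 0 * u) /\
  locally_lipschitz f /\
  (forall u, (u < 0 \/ 1 < u) -> f u < 0).

Definition C1_nonneg (g : R -> R) : Prop :=
  exists dg : R -> R,
    (forall t, 0 < t -> is_derive g t (dg t)) /\
    filterlim (fun h => (g h - g 0) / h) (at_right 0) (locally (dg 0)) /\
    (forall t, 0 <= t ->
       filterlim dg (within (fun s => 0 <= s) (locally t)) (locally (dg t))).

Definition supersolution (f : R -> R) (alpha beta : R)
    (V P : Z -> R -> R) : Prop :=
  (forall j, C1_nonneg (V j) /\ C1_nonneg (P j)) /\
  forall (t : R) (j : Z), 0 < t ->
    Derive (V j) t >= - 2 * alpha * V j t + beta * (P j t + P (j + 1)%Z t) /\
    Derive (P j) t >= f (P j t) + alpha * (V j t + V (j - 1)%Z t) - 2 * beta * P j t.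

Definition subsolution (f : R -> R) (alpha beta : R)
    (V P : Z -> R -> R) : Prop :=
  (forall j, C1_nonneg (V j) /\ C1_nonneg (P j)) /\
  forall (t : R) (j : Z), 0 < t ->
    Derive (V j) t <= - 2 * alpha * V j t + beta * (P j t + P (j + 1)%Z t) /\
    Derive (P j) t <= f (P j t) + alpha * (V j t + V (j - 1)%Z t) - 2 * beta * P j t.

Definition locally_bounded (V P : Z -> R -> R) : Prop :=
  forall T : R, 0 < T -> exists M : R,
    forall (t : R) (j : Z), 0 <= t <= T -> Rabs (V j t) + Rabs (P j t) <= M.

(* Main.v *)
Require Import Defs.
From Stdlib Require Import Reals ZArith.
From Coquelicot Require Import Coquelicot.
From Stdlib Require Import Lra Lia Psatz.
Open Scope R_scope.

Lemma mvt_open (h dh : R -> R) (a b : R) :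
  a < b ->
  (forall x, a < x < b -> is_derive h x (dh x)) ->
  (forall x, a <= x <= b -> continuity_pt h x) ->
  exists c, a < c < b /\ h b - h a = (b - a) * dh c.
Proof.
  intros Hab Hd Hc.
  assert (pr1 : forall c, a < c < b -> derivable_pt h c).
  { intros c Hc'. exists (dh c). apply is_derive_Reals. now apply Hd. }
  assert (pr2 : forall c, a < c < b -> derivable_pt id c).
  { intros c _. apply derivable_pt_id. }
  destruct (MVT h id a b pr1 pr2 Hab Hc) as [c [P E]].
  { intros c _. apply derivable_continuous_pt, derivable_pt_id. }
  exists c; split; [exact P|].
  rewrite (derive_pt_eq_0 h c (dh c) (pr1 c P)) in E.
  2: { apply is_derive_Reals. now apply Hd. }
  rewrite (derive_pt_eq_0 id c 1 (pr2 c P)) in E.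
  2: { apply derivable_pt_lim_id. }
  unfold id in E. lra.
Qed.

Lemma cont_of_derive (h : R -> R) x l : is_derive h x l -> continuity_pt h x.
Proof.
  intros H. apply continuity_pt_filterlim. apply (ex_derive_continuous (K:=R_AbsRing) (V:=R_NormedModule)). now exists l.
Qed.

Lemma mvt_exp (g dg : R -> R) (k t0 s : R) :
  (forall x, 0 < x -> is_derive g x (dg x)) ->
  continuity_pt (fun t => g (Rmax 0 t)) 0 -> 0 <= t0 < s ->
  exists xi, t0 < xi < s /\
    exp (k*s) * g s - exp (k*t0) * g t0 = (s - t0) * (exp (k*xi) * (k * g xi + dg xi)).
Proof.
  intros Hd Hc0 Hts.
  set (G := fun t => g (Rmax 0 t)).
  assert (HG : forall x, 0 < x -> is_derive G x (dg x)).
  { intros x Hx. apply is_derive_ext_loc with g; [|now apply Hd].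
    assert (Hp : 0 < x / 2) by lra.
    exists (mkposreal _ Hp). intros y Hy. unfold G.
    cbn in Hy. unfold ball in Hy; cbn in Hy. unfold AbsRing_ball, abs, minus, plus, opp in Hy; cbn in Hy.
    rewrite Rmax_right; [reflexivity|]. apply Rabs_def2 in Hy. lra. }
  set (h := fun t => exp (k*t) * G t).
  destruct (mvt_open h (fun x => exp (k*x) * (k * g x + dg x)) t0 s) as [c [Hc E]].
  - lra.
  - intros x Hx. unfold h.
    assert (He : is_derive (fun t => exp (k*t)) x (k * exp (k*x))).
    { auto_derive; auto; ring. }
    assert (HGx := HG x ltac:(lra)).
    generalize (is_derive_mult _ _ _ _ _ He HGx ltac:(intros; apply Rmult_comm)).
    unfold G. rewrite Rmax_right by lra. intro H'.
    replace (exp (k * x) * (k * g x + dg x)) with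
      (plus (mult (k * exp (k * x)) (g x)) (mult (exp (k * x)) (dg x))).
    exact H'.
    unfold plus, mult; cbn. ring.
  - intros x Hx. unfold h.
    apply continuity_pt_mult.
    + apply derivable_continuous_pt.
      apply derivable_pt_comp; [apply derivable_pt_scal, derivable_pt_id|apply derivable_pt_exp].
    + destruct (Req_dec x 0) as [->|Hx0]; [exact Hc0|].
      apply (cont_of_derive G x (dg x)). apply HG. lra.
  - exists c. split; [lra|].
    unfold h, G in E. rewrite (Rmax_right 0 s), (Rmax_right 0 t0) in E by lra.
    exact E.
Qed.

Definition LipUpTo (f : R -> R) (M x : R) :=
  exists L, 0 <= L /\ forall y z, -M <= y <= x -> -M <= z <= x -> Rabs (f y - f z) <= L * Rabs (y - z).

Lemma lip_compact f M : locally_lipschitz f -> 0 <= M ->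
  exists L, 0 <= L /\ forall y z, -M <= y <= M -> -M <= z <= M -> Rabs (f y - f z) <= L * Rabs (y - z).
Proof.
  intros Hf HM.
  set (E := fun x => x <= M /\ LipUpTo f M x).
  assert (HE0 : E (-M)).
  { split; [lra|]. exists 0. split; [lra|]. intros y z Hy Hz.
    replace y with (-M) by lra. replace z with (-M) by lra.
    rewrite Rminus_diag, Rabs_R0. lra. }
  destruct (completeness E) as [s [Hub Hlub]].
  { exists M. intros x [Hx _]. exact Hx. }
  { exists (-M). exact HE0. }
  assert (HsM : s <= M) by (apply Hlub; intros x [Hx _]; exact Hx).
  assert (Hs0 : -M <= s) by (apply Hub; exact HE0).
  destruct (Hf s) as [d [L1 [Hd HL1]]].
  assert (Hx : exists x, E x /\ s - d < x).
  { apply Classical_Prop.NNPP. intro Hn.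
    assert (s <= s - d); [|lra].
    apply Hlub. intros x Ex. apply Rnot_lt_le. intro Hlt. apply Hn. now exists x. }
  destruct Hx as [x [[HxM [L0 [HL0 HL0']]] Hxd]].
  assert (Hxs : x <= s) by (apply Hub; split; [exact HxM| exists L0; now split]).
  set (x1 := Rmin (s + d/2) M).
  assert (HE1 : E x1).
  { split; [unfold x1; apply Rmin_r|].
    exists (L0 + Rmax L1 0). split; [generalize (Rmax_r L1 0); lra|].
    assert (Hx1 : x1 <= s + d/2) by (unfold x1; apply Rmin_l).
    assert (K1 : forall y z, s - d < y <= x1 -> s - d < z <= x1 ->
                 Rabs (f y - f z) <= Rmax L1 0 * Rabs (y - z)).
    { intros y z Hy Hz. eapply Rle_trans; [apply HL1|].
      - apply Rabs_def1; lra.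
      - apply Rabs_def1; lra.
      - apply Rmult_le_compat_r; [apply Rabs_pos|apply Rmax_l]. }
    assert (K2 : forall y z, -M <= y <= x -> x <= z <= x1 ->
                 Rabs (f y - f z) <= (L0 + Rmax L1 0) * Rabs (y - z)).
    { intros y z Hy Hz.
      assert (A1 := HL0' y x Hy ltac:(lra)).
      assert (A2 := K1 x z ltac:(lra) ltac:(lra)).
      replace (f y - f z) with ((f y - f x) + (f x - f z)) by ring.
      eapply Rle_trans; [apply Rabs_triang|].
      rewrite (Rabs_left1 (y - z)) by lra.
      rewrite (Rabs_left1 (y - x)) in A1 by lra.
      rewrite (Rabs_left1 (x - z)) in A2 by lra.
      generalize (Rmax_r L1 0); nra. }
    intros y z Hy Hz.
    destruct (Rle_lt_dec y x) as [Hyx|Hyx]; destruct (Rle_lt_dec z x) as [Hzx|Hzx].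
    - eapply Rle_trans; [apply HL0'; lra|].
      apply Rmult_le_compat_r; [apply Rabs_pos|generalize (Rmax_r L1 0); lra].
    - apply K2; lra.
    - rewrite Rabs_minus_sym, (Rabs_minus_sym y). apply K2; lra.
    - eapply Rle_trans; [apply K1; lra|].
      apply Rmult_le_compat_r; [apply Rabs_pos|lra]. }
  assert (Hx1s : x1 <= s) by (apply Hub; exact HE1).
  assert (Hx1M : x1 = M).
  { unfold x1 in *. destruct (Rle_dec (s + d/2) M) as [H|H]; [rewrite Rmin_left in Hx1s by lra; lra|rewrite Rmin_right by lra; reflexivity]. }
  destruct HE1 as [_ [L [HL HL']]]. exists L. split; [exact HL|].
  intros y z Hy Hz. apply HL'; lra.
Qed.

Lemma exp_mono x y : x <= y -> exp x <= exp y.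
Proof. intros [H|H]; [apply Rlt_le, exp_increasing, H|subst; lra]. Qed.

Lemma arith1 Es E0 As At0 d tau Ex EkT D C mu :
  Es * As - E0 * At0 = d * (Ex * D) -> 1 <= Es -> 0 < E0 -> 0 <= At0 ->
  0 <= d <= tau -> 0 < Ex <= EkT -> D >= - C * mu -> 0 <= mu -> 0 < C ->
  tau * C * EkT = / 2 -> As >= - mu / 2.
Proof.
  intros H HEs HE0 HA0 Hd HEx HD Hmu HC Ht.
  assert (H1 : Ex * D >= - (Ex * C * mu)) by nra.
  assert (H2 : d * (Ex * C * mu) <= tau * (EkT * C * mu)).
  { assert (0 <= Ex * C * mu) by (apply Rmult_le_pos; [|lra]; apply Rmult_le_pos; lra).
    assert (Ex * C * mu <= EkT * C * mu) by (apply Rmult_le_compat_r; [lra|]; apply Rmult_le_compat_r; lra).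
    apply Rmult_le_compat; lra. }
  assert (H3 : Es * As >= - mu / 2) by nra.
  destruct (Rle_lt_dec 0 As); nra.
Qed.

Lemma weak_core (al be : R) (a b da db F : Z -> R -> R) :
  0 < al -> 0 < be ->
  (forall j t, 0 < t -> is_derive (a j) t (da j t) /\ is_derive (b j) t (db j t)) ->
  (forall j, continuity_pt (fun t => a j (Rmax 0 t)) 0 /\ continuity_pt (fun t => b j (Rmax 0 t)) 0) ->
  (forall j t, 0 < t -> da j t >= -2*al*a j t + be*(b j t + b (j+1)%Z t) /\
                        db j t >= F j t + al*(a j t + a (j-1)%Z t) - 2*be*b j t) ->
  (forall T, 0 < T -> exists L, 0 <= L /\ forall j t, 0 <= t <= T -> F j t >= - L * Rabs (b j t)) ->
  (forall T, 0 < T -> exists M, forall j t, 0 <= t <= T -> Rabs (a j t) <= M /\ Rabs (b j t) <= M) ->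
  (forall j, 0 <= a j 0 /\ 0 <= b j 0) ->
  forall t j, 0 <= t -> 0 <= a j t /\ 0 <= b j t.
Proof.
  intros Hal Hbe Hder Hc0 Hineq HF Hbd Hinit t j Ht.
  set (T := t + 1).
  destruct (HF T ltac:(unfold T; lra)) as [L [HL HFL]].
  destruct (Hbd T ltac:(unfold T; lra)) as [M HM].
  set (k := 2*al + 2*be + L).
  set (C := 2 * k).
  assert (Hk : 0 < k) by (unfold k; lra).
  assert (HC : 0 < C) by (unfold C; lra).
  assert (Dlow : forall mu xi, 0 <= mu -> 0 < xi <= T ->
            (forall j', a j' xi >= - mu /\ b j' xi >= - mu) ->
            forall j', k * a j' xi + da j' xi >= - C * mu /\ k * b j' xi + db j' xi >= - C * mu).
  { intros mu xi Hmu Hxi Hall j'.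
    destruct (Hineq j' xi ltac:(lra)) as [Ia Ib].
    destruct (Hall j') as [A1 B1]. destruct (Hall (j'+1)%Z) as [_ B2].
    destruct (Hall (j'-1)%Z) as [A2 _].
    assert (HFx := HFL j' xi ltac:(lra)).
    split.
    - assert ((k - 2*al) * (a j' xi + mu) >= 0) by (unfold k; nra).
      unfold C, k in *. nra.
    - destruct (Rle_lt_dec 0 (b j' xi)) as [Hb|Hb].
      + rewrite Rabs_pos_eq in HFx by lra.
        assert ((k - 2*be - L) * b j' xi >= 0) by (unfold k; nra).
        unfold C, k in *. nra.
      + rewrite Rabs_left in HFx by lra.
        assert ((k - 2*be + L) * (b j' xi + mu) >= 0) by (unfold k; nra).
        unfold C, k in *. nra. }
  set (tau := / (2 * C * exp (k * T))).
  assert (Htau : 0 < tau) by (unfold tau; apply Rinv_0_lt_compat; generalize (exp_pos (k*T)); nra).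
  assert (HtauE : tau * C * exp (k * T) = / 2).
  { unfold tau. field. generalize (exp_pos (k*T)); lra. }
  assert (Step : forall t0, 0 <= t0 < T -> (forall j', 0 <= a j' t0 /\ 0 <= b j' t0) ->
            forall j' s, t0 <= s <= Rmin (t0 + tau) T -> 0 <= a j' s /\ 0 <= b j' s).
  { intros t0 Ht0 Hini.
    set (t1 := Rmin (t0 + tau) T).
    assert (Ht1 : t1 <= t0 + tau /\ t1 <= T) by (unfold t1; split; [apply Rmin_l|apply Rmin_r]).
    set (E := fun x => x = 0 \/ exists j' s, t0 <= s <= t1 /\ (x = - a j' s \/ x = - b j' s)).
    destruct (completeness E) as [mu [Hub Hlub]].
    { exists M. intros x [->|[j' [s [Hs [-> | ->]]]]].
      - specialize (HM 0%Z 0 ltac:(lra)). destruct HM as [HM _]. generalize (Rabs_pos (a 0%Z 0)); lra.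
      - destruct (HM j' s ltac:(lra)) as [HM1 _]. generalize (Rabs_Ropp (a j' s)) (Rle_abs (- a j' s)); lra.
      - destruct (HM j' s ltac:(lra)) as [_ HM1]. generalize (Rabs_Ropp (b j' s)) (Rle_abs (- b j' s)); lra. }
    { exists 0. now left. }
    assert (Hmu : 0 <= mu) by (apply Hub; now left).
    assert (Hbnd : forall j' s, t0 <= s <= t1 -> a j' s >= - mu /\ b j' s >= - mu).
    { intros j' s Hs. split.
      - assert (- a j' s <= mu); [|lra]. apply Hub. right. exists j', s. auto.
      - assert (- b j' s <= mu); [|lra]. apply Hub. right. exists j', s. auto. }
    assert (Gen : forall (g dg : R -> R), (forall x, 0 < x -> is_derive g x (dg x)) ->
              continuity_pt (fun t => g (Rmax 0 t)) 0 -> 0 <= g t0 ->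
              (forall xi, t0 < xi <= t1 -> k * g xi + dg xi >= - C * mu) ->
              forall s, t0 <= s <= t1 -> g s >= - mu / 2).
    { intros g dg Hg Hg0 Hgt0 Hgd s Hs.
      destruct (Req_dec s t0) as [->|Hst]; [lra|].
      destruct (mvt_exp g dg k t0 s Hg Hg0 ltac:(lra)) as [xi [Hxi Exi]].
      eapply (arith1 (exp (k*s)) (exp (k*t0)) (g s) (g t0) (s - t0) tau (exp (k*xi)) (exp (k*T))
                (k * g xi + dg xi) C mu); try eassumption.
      - generalize (exp_ineq1_le (k*s)). assert (0 <= k * s) by nra. lra.
      - apply exp_pos.
      - lra.
      - split; [apply exp_pos|apply exp_mono; nra].
      - apply Hgd. lra. }
    assert (Hmu2 : mu <= mu / 2).
    { apply Hlub. intros x [->|[j' [s [Hs [-> | ->]]]]].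
      - lra.
      - assert (a j' s >= - mu / 2); [|lra].
        apply (Gen (a j') (da j')).
        + intros x Hx; apply Hder, Hx.
        + apply Hc0.
        + apply Hini.
        + intros xi Hxi. apply (Dlow mu xi Hmu ltac:(lra)). intros j''. apply Hbnd. lra.
        + exact Hs.
      - assert (b j' s >= - mu / 2); [|lra].
        apply (Gen (b j') (db j')).
        + intros x Hx; apply Hder, Hx.
        + apply Hc0.
        + apply Hini.
        + intros xi Hxi. apply (Dlow mu xi Hmu ltac:(lra)). intros j''. apply Hbnd. lra.
        + exact Hs. }
    intros j' s Hs. destruct (Hbnd j' s Hs). lra. }
  assert (Iter : forall n : nat, forall j' s, 0 <= s <= Rmin (INR n * tau) T -> 0 <= a j' s /\ 0 <= b j' s).
  { induction n as [|n IH]; intros j' s Hs.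
    - cbn in Hs. rewrite Rmult_0_l, Rmin_left in Hs by (unfold T; lra).
      replace s with 0 by lra. apply Hinit.
    - destruct (Rle_lt_dec s (Rmin (INR n * tau) T)) as [Hs'|Hs'].
      + apply IH. lra.
      + assert (HnT : INR n * tau < T).
        { destruct (Rle_dec T (INR n * tau)) as [H|H]; [|lra].
          rewrite Rmin_right in Hs' by lra.
          generalize (Rmin_r (INR (S n) * tau) T). lra. }
        rewrite Rmin_left in Hs' by lra.
        apply (Step (INR n * tau)).
        * split; [generalize (pos_INR n); nra|lra].
        * intros j''. apply IH. rewrite Rmin_left by lra. split; [generalize (pos_INR n); nra|lra].
        * split; [lra|]. rewrite S_INR in Hs.
          replace ((INR n + 1) * tau) with (INR n * tau + tau) in Hs by ring. apply Hs. }
  destruct (nfloor_ex (T / tau)) as [n [_ Hn]].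
  { apply Rdiv_le_0_compat; unfold T; lra. }
  apply (Iter (S n)). rewrite S_INR.
  assert (T < (INR n + 1) * tau).
  { apply (Rmult_lt_compat_r tau) in Hn; [|lra].
    unfold Rdiv in Hn. rewrite Rmult_assoc, Rinv_l, Rmult_1_r in Hn by lra. exact Hn. }
  rewrite Rmin_right by lra. unfold T; lra.
Qed.

Lemma e0 q : Z.even (2*q) = true /\ Z.div2 (2*q) = q.
Proof. split. rewrite Z.even_mul; reflexivity. rewrite Z.div2_div, Z.mul_comm, Z.div_mul; lia. Qed.
Lemma e1 q : Z.even (2*q+1) = false /\ Z.div2 (2*q+1) = q.
Proof. split. rewrite Z.even_add, Z.even_mul; reflexivity. rewrite Z.div2_div, Z.mul_comm, Z.div_add_l by lia. rewrite Z.div_small by lia. lia. Qed.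

Definition node (a b : Z -> R -> R) (p : Z) (t : R) : R :=
  if Z.even p then b (Z.div2 p) t else a (Z.div2 p) t.

Lemma node0 a b q t : node a b (2*q) t = b q t.
Proof. unfold node. destruct (e0 q) as [-> ->]. reflexivity. Qed.
Lemma node1 a b q t : node a b (2*q+1) t = a q t.
Proof. unfold node. destruct (e1 q) as [-> ->]. reflexivity. Qed.

Lemma Zparity p : exists q, p = (2*q)%Z \/ p = (2*q+1)%Z.
Proof. exists (Z.div2 p). rewrite (Z.div2_odd p) at 1 3. destruct (Z.odd p); cbn; lia. Qed.

Lemma strict_core (al be : R) (a b da db F : Z -> R -> R) :
  0 < al -> 0 < be ->
  (forall j t, 0 < t -> is_derive (a j) t (da j t) /\ is_derive (b j) t (db j t)) ->
  (forall j, continuity_pt (fun t => a j (Rmax 0 t)) 0 /\ continuity_pt (fun t => b j (Rmax 0 t)) 0) ->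
  (forall j t, 0 < t -> da j t >= -2*al*a j t + be*(b j t + b (j+1)%Z t) /\
                        db j t >= F j t + al*(a j t + a (j-1)%Z t) - 2*be*b j t) ->
  (forall T, 0 < T -> exists L, 0 <= L /\ forall j t, 0 <= t <= T -> F j t >= - L * Rabs (b j t)) ->
  (forall T, 0 < T -> exists M, forall j t, 0 <= t <= T -> Rabs (a j t) <= M /\ Rabs (b j t) <= M) ->
  (forall j, 0 <= a j 0 /\ 0 <= b j 0) ->
  (exists j, 0 < a j 0 \/ 0 < b j 0) ->
  forall t j, 0 < t -> 0 < a j t /\ 0 < b j t.
Proof.
  intros Hal Hbe Hder Hc0 Hineq HF Hbd Hinit [j0 Hj0].
  assert (W := weak_core al be a b da db F Hal Hbe Hder Hc0 Hineq HF Hbd Hinit).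
  assert (PA : forall j t0 s, 0 <= t0 < s ->
            (0 < a j t0 \/ (forall xi, t0 < xi < s -> 0 < b j xi \/ 0 < b (j+1)%Z xi)) -> 0 < a j s).
  { intros j t0 s Hs Hc.
    destruct (HF (s+1) ltac:(lra)) as [L [HL HFL]].
    set (k := 2*al + 2*be + L).
    destruct (mvt_exp (a j) (da j) k t0 s (fun x Hx => proj1 (Hder j x Hx)) (proj1 (Hc0 j)) Hs)
      as [xi [Hxi E]].
    destruct (Hineq j xi ltac:(lra)) as [Ia _].
    destruct (W xi j ltac:(lra)) as [A1 B1]. destruct (W xi (j+1)%Z ltac:(lra)) as [_ B2].
    destruct (W t0 j ltac:(lra)) as [A0 _].
    assert (Hd : k * a j xi + da j xi >= be * (b j xi + b (j+1)%Z xi)).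
    { assert ((k - 2*al) * a j xi >= 0) by (unfold k; nra). nra. }
    assert (He := exp_pos (k*xi)). assert (He0 := exp_pos (k*t0)). assert (Hes := exp_pos (k*s)).
    assert (0 < exp (k*s) * a j s); [|nra].
    destruct Hc as [Hc|Hc].
    - assert (0 <= (s - t0) * (exp (k * xi) * (k * a j xi + da j xi))).
      { apply Rmult_le_pos; [lra|]. apply Rmult_le_pos; [lra|]. nra. }
      nra.
    - assert (0 < (s - t0) * (exp (k * xi) * (k * a j xi + da j xi))).
      { apply Rmult_lt_0_compat; [lra|]. apply Rmult_lt_0_compat; [lra|].
        destruct (Hc xi Hxi); nra. }
      nra. }
  assert (PB : forall j t0 s, 0 <= t0 < s ->
            (0 < b j t0 \/ (forall xi, t0 < xi < s -> 0 < a j xi \/ 0 < a (j-1)%Z xi)) -> 0 < b j s).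
  { intros j t0 s Hs Hc.
    destruct (HF (s+1) ltac:(lra)) as [L [HL HFL]].
    set (k := 2*al + 2*be + L).
    destruct (mvt_exp (b j) (db j) k t0 s (fun x Hx => proj2 (Hder j x Hx)) (proj2 (Hc0 j)) Hs)
      as [xi [Hxi E]].
    destruct (Hineq j xi ltac:(lra)) as [_ Ib].
    destruct (W xi j ltac:(lra)) as [A1 B1]. destruct (W xi (j-1)%Z ltac:(lra)) as [A2 _].
    destruct (W t0 j ltac:(lra)) as [_ B0].
    assert (HFx := HFL j xi ltac:(lra)). rewrite Rabs_pos_eq in HFx by lra.
    assert (Hd : k * b j xi + db j xi >= al * (a j xi + a (j-1)%Z xi)).
    { assert ((k - 2*be - L) * b j xi >= 0) by (unfold k; nra). nra. }
    assert (He := exp_pos (k*xi)). assert (He0 := exp_pos (k*t0)). assert (Hes := exp_pos (k*s)).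
    assert (0 < exp (k*s) * b j s); [|nra].
    destruct Hc as [Hc|Hc].
    - assert (0 <= (s - t0) * (exp (k * xi) * (k * b j xi + db j xi))).
      { apply Rmult_le_pos; [lra|]. apply Rmult_le_pos; [lra|]. nra. }
      nra.
    - assert (0 < (s - t0) * (exp (k * xi) * (k * b j xi + db j xi))).
      { apply Rmult_lt_0_compat; [lra|]. apply Rmult_lt_0_compat; [lra|].
        destruct (Hc xi Hxi); nra. }
      nra. }
  set (nd := node a b).
  assert (Pers : forall p s t, 0 <= s <= t -> 0 < nd p s -> 0 < nd p t).
  { intros p s t Hst Hp. destruct (Req_dec s t) as [<-|Hne]; [exact Hp|].
    destruct (Zparity p) as [q [-> | ->]]; unfold nd in *.
    - rewrite node0 in *. apply (PB q s t); [lra|now left].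
    - rewrite node1 in *. apply (PA q s t); [lra|now left]. }
  assert (Nb : forall p s t, 0 <= s < t -> 0 < nd p s -> 0 < nd (p+1)%Z t /\ 0 < nd (p-1)%Z t).
  { intros p s t Hst Hp.
    assert (Hper : forall xi, s < xi < t -> 0 < nd p xi) by (intros; apply (Pers p s); [lra|exact Hp]).
    destruct (Zparity p) as [q [-> | ->]]; unfold nd in *.
    - split.
      + rewrite node1. apply (PA q s t); [lra|]. right. intros xi Hxi. left.
        specialize (Hper xi Hxi). now rewrite node0 in Hper.
      + replace (2*q-1)%Z with (2*(q-1)+1)%Z by lia. rewrite node1. apply (PA (q-1)%Z s t); [lra|].
        right. intros xi Hxi. right. specialize (Hper xi Hxi). rewrite node0 in Hper.
        now replace (q-1+1)%Z with q by lia.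
    - split.
      + replace (2*q+1+1)%Z with (2*(q+1))%Z by lia. rewrite node0. apply (PB (q+1)%Z s t); [lra|].
        right. intros xi Hxi. right. specialize (Hper xi Hxi). rewrite node1 in Hper.
        now replace (q+1-1)%Z with q by lia.
      + replace (2*q+1-1)%Z with (2*q)%Z by lia. rewrite node0. apply (PB q s t); [lra|].
        right. intros xi Hxi. left. specialize (Hper xi Hxi). now rewrite node1 in Hper. }
  set (p0 := if Rlt_dec 0 (a j0 0) then (2*j0+1)%Z else (2*j0)%Z).
  assert (Hp0 : 0 < nd p0 0).
  { unfold p0, nd. destruct (Rlt_dec 0 (a j0 0)).
    - now rewrite node1.
    - rewrite node0. destruct Hj0; [contradiction|assumption]. }
  assert (Dist : forall n : nat, forall q, Z.abs (q - p0) = Z.of_nat n -> forall t, 0 < t -> 0 < nd q t).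
  { induction n as [|n IH]; intros q Hq t Ht.
    - assert (q = p0) by lia. subst q. apply (Pers p0 0); [lra|exact Hp0].
    - destruct (Z_lt_le_dec p0 q) as [Hlt|Hle].
      + assert (H1 := IH (q-1)%Z ltac:(lia) (t/2) ltac:(lra)).
        destruct (Nb (q-1)%Z (t/2) t ltac:(lra) H1) as [H2 _].
        now replace (q-1+1)%Z with q in H2 by lia.
      + assert (H1 := IH (q+1)%Z ltac:(lia) (t/2) ltac:(lra)).
        destruct (Nb (q+1)%Z (t/2) t ltac:(lra) H1) as [_ H2].
        now replace (q+1-1)%Z with q in H2 by lia. }
  intros t j Ht. split.
  - rewrite <- (node1 a b). apply (Dist (Z.to_nat (Z.abs (2*j+1 - p0)))); [lia|exact Ht].
  - rewrite <- (node0 a b). apply (Dist (Z.to_nat (Z.abs (2*j - p0)))); [lia|exact Ht].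
Qed.

Lemma c1_props g : C1_nonneg g ->
  (forall t, 0 < t -> is_derive g t (Derive g t)) /\ continuity_pt (fun t => g (Rmax 0 t)) 0.
Proof.
  intros [dg [Hd [Hr _]]]. split.
  - intros t Ht. rewrite (is_derive_unique g t (dg t) (Hd t Ht)). apply Hd, Ht.
  - apply filterlim_locally with (eps := mkposreal 1 Rlt_0_1) in Hr.
    destruct Hr as [d Hdl].
    unfold continuity_pt, continue_in, limit1_in, limit_in. intros eps Heps.
    set (K := Rabs (dg 0) + 1).
    assert (HK : 0 < K) by (unfold K; generalize (Rabs_pos (dg 0)); lra).
    exists (Rmin d (eps / K)). split.
    { apply Rmin_pos; [apply cond_pos|]. apply Rdiv_lt_0_compat; lra. }
    intros x [_ Hx]. cbn in Hx |- *. unfold R_dist in *. rewrite Rminus_0_r in Hx.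
    rewrite (Rmax_left 0 0) by lra.
    destruct (Rle_lt_dec x 0) as [Hx0|Hx0].
    + rewrite Rmax_left by lra. rewrite Rminus_diag, Rabs_R0. lra.
    + rewrite Rmax_right by lra.
      assert (Hxd : Rabs (x - 0) < d).
      { rewrite Rminus_0_r. generalize (Rmin_l d (eps/K)); lra. }
      specialize (Hdl x Hxd Hx0). cbn in Hdl. unfold ball in Hdl; cbn in Hdl.
      unfold AbsRing_ball, abs, minus, plus, opp in Hdl; cbn in Hdl.
      assert (Hq : Rabs ((g x - g 0) / x) < K).
      { unfold K. replace ((g x - g 0) / x) with (((g x - g 0) / x + - dg 0) + dg 0) by ring.
        eapply Rle_lt_trans; [apply Rabs_triang|]. lra. }
      replace (g x - g 0) with (((g x - g 0) / x) * x) by (field; lra).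
      rewrite Rabs_mult, (Rabs_pos_eq x) by lra.
      rewrite Rabs_pos_eq in Hx by lra.
      assert (x < eps / K) by (generalize (Rmin_r d (eps/K)); lra).
      apply Rle_lt_trans with (K * x).
      * apply Rmult_le_compat_r; lra.
      * apply (Rmult_lt_compat_l K) in H; [|lra].
        replace (K * (eps / K)) with eps in H by (field; lra). exact H.
Qed.

Theorem proposition6p2 (alpha beta : R) (f df : R -> R)
  (Vl Pl Vu Pu : Z -> R -> R) :
  0 < alpha -> 0 < beta -> admissible_f f df ->
  subsolution f alpha beta Vl Pl -> supersolution f alpha beta Vu Pu ->
  locally_bounded Vl Pl -> locally_bounded Vu Pu ->
  (forall j : Z, Vl j 0 <= Vu j 0 /\ Pl j 0 <= Pu j 0) ->
  (forall (t : R) (j : Z), 0 < t -> Vl j t <= Vu j t /\ Pl j t <= Pu j t) /\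
  ((exists j : Z, Vl j 0 <> Vu j 0 \/ Pl j 0 <> Pu j 0) ->
   forall (t : R) (j : Z), 0 < t -> Vl j t < Vu j t /\ Pl j t < Pu j t).
Proof.
  intros Hal Hbe [_ [_ [_ [_ [Hlip _]]]]] [Csub Isub] [Csup Isup] Bl Bu Hinit.
  set (a := fun j t => Vu j t - Vl j t).
  set (b := fun j t => Pu j t - Pl j t).
  set (da := fun j t => Derive (Vu j) t - Derive (Vl j) t).
  set (db := fun j t => Derive (Pu j) t - Derive (Pl j) t).
  set (F := fun j t => f (Pu j t) - f (Pl j t)).
  assert (Hder : forall j t, 0 < t -> is_derive (a j) t (da j t) /\ is_derive (b j) t (db j t)).
  { intros j t Ht.
    destruct (Csub j) as [C1 C2]. destruct (Csup j) as [C3 C4].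
    split; apply (is_derive_minus (K:=R_AbsRing) (V:=R_NormedModule)).
    - apply (proj1 (c1_props _ C3)), Ht.
    - apply (proj1 (c1_props _ C1)), Ht.
    - apply (proj1 (c1_props _ C4)), Ht.
    - apply (proj1 (c1_props _ C2)), Ht. }
  assert (Hc0 : forall j, continuity_pt (fun t => a j (Rmax 0 t)) 0 /\ continuity_pt (fun t => b j (Rmax 0 t)) 0).
  { intros j. destruct (Csub j) as [C1 C2]. destruct (Csup j) as [C3 C4]. unfold a, b.
    split; apply continuity_pt_minus.
    - apply (proj2 (c1_props _ C3)).
    - apply (proj2 (c1_props _ C1)).
    - apply (proj2 (c1_props _ C4)).
    - apply (proj2 (c1_props _ C2)). }
  assert (Hineq : forall j t, 0 < t -> da j t >= -2*alpha*a j t + beta*(b j t + b (j+1)%Z t) /\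
                        db j t >= F j t + alpha*(a j t + a (j-1)%Z t) - 2*beta*b j t).
  { intros j t Ht. destruct (Isub t j Ht) as [I1 I2]. destruct (Isup t j Ht) as [I3 I4].
    unfold a, b, da, db, F. split; lra. }
  assert (HF : forall T, 0 < T -> exists L, 0 <= L /\ forall j t, 0 <= t <= T -> F j t >= - L * Rabs (b j t)).
  { intros T HT. destruct (Bl T HT) as [M1 HM1]. destruct (Bu T HT) as [M2 HM2].
    destruct (lip_compact f (Rabs M1 + Rabs M2) Hlip) as [L [HL HL']].
    { generalize (Rabs_pos M1) (Rabs_pos M2); lra. }
    exists L. split; [exact HL|]. intros j t Ht.
    specialize (HM1 t j Ht). specialize (HM2 t j Ht).
    generalize (Rle_abs M1) (Rle_abs M2) (Rabs_pos (Vl j t)) (Rabs_pos (Vu j t)) (Rabs_pos (Pl j t)) (Rabs_pos (Pu j t)); intros.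
    assert (HPl : Rabs (Pl j t) <= Rabs M1 + Rabs M2) by lra.
    assert (HPu : Rabs (Pu j t) <= Rabs M1 + Rabs M2) by lra.
    apply Rabs_le_between in HPl. apply Rabs_le_between in HPu.
    assert (Hl := HL' (Pu j t) (Pl j t) HPu HPl).
    unfold F, b. generalize (Rle_abs (- (f (Pu j t) - f (Pl j t)))). rewrite Rabs_Ropp. lra. }
  assert (Hbd : forall T, 0 < T -> exists M, forall j t, 0 <= t <= T -> Rabs (a j t) <= M /\ Rabs (b j t) <= M).
  { intros T HT. destruct (Bl T HT) as [M1 HM1]. destruct (Bu T HT) as [M2 HM2].
    exists (M1 + M2). intros j t Ht.
    specialize (HM1 t j Ht). specialize (HM2 t j Ht). unfold a, b.
    generalize (Rabs_pos (Vl j t)) (Rabs_pos (Vu j t)) (Rabs_pos (Pl j t)) (Rabs_pos (Pu j t)).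
    generalize (Rabs_triang (Vu j t) (- Vl j t)) (Rabs_triang (Pu j t) (- Pl j t)).
    rewrite !Rabs_Ropp. unfold Rminus. intros. split; lra. }
  assert (Hini : forall j, 0 <= a j 0 /\ 0 <= b j 0).
  { intros j. destruct (Hinit j). unfold a, b. split; lra. }
  split.
  - intros t j Ht. destruct (weak_core alpha beta a b da db F Hal Hbe Hder Hc0 Hineq HF Hbd Hini t j ltac:(lra)).
    unfold a, b in *. split; lra.
  - intros [j0 Hj0] t j Ht.
    assert (Hex : exists j, 0 < a j 0 \/ 0 < b j 0).
    { exists j0. destruct (Hinit j0). unfold a, b. destruct Hj0; [left|right]; lra. }
    destruct (strict_core alpha beta a b da db F Hal Hbe Hder Hc0 Hineq HF Hbd Hini Hex t j Ht).
    unfold a, b in *. split; lra.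
Qed.
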